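(* Let $\{E_n\}_{n\ge1}$ be a sequence of diagonal projections such that $\sum_{n\ge1}E_n=I+K$ for some compact operator $K$ (the series converging in the weak, equivalently strong, operator topology). Then there exists an integer $n_0\ge1$ such that: (i) $E_nE_m=\delta_{nm}E_n$ for all $m,n>n_0$; (ii) $E_nE_m$ is a finite-rank projection for all $1\le m,n\le n_0$ with $m\ne n$; (iii) for each $N\ge n_0$, $E^{(N)}=\sum_{n>N}E_n$ is a diagonal projection and $E^{(N)}E_n=0$ for all $n=1,\dots,N$.
   Context: $\mathcal{H}$ is a separable infinite-dimensional complex Hilbert space with a fixed orthonormal basis $\{e_n\}_{n\ge1}$; $\mathcal{D}$ is the algebra of operators diagonal with respect to this basis; a diagonal projection is an orthogonal projection belonging to $\mathcal{D}$. *)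

(* Defs.v *)
From HB Require Import structures.
From mathcomp Require Import all_boot all_order all_algebra.
From mathcomp Require Import complex.
From mathcomp Require Import all_classical all_reals all_analysis.
Set Implicit Arguments. Unset Strict Implicit. Unset Printing Implicit Defensive.
Import Order.TTheory GRing.Theory Num.Theory.
Import numFieldNormedType.Exports.
Local Open Scope classical_set_scope.
Local Open Scope ring_scope.

(* The Hilbert space H = l^2(N, C) with orthonormal basis e_k (k : nat);
   elements are represented as complex sequences nat -> R[i]. *)
Definition vec (R : realType) := nat -> R[i].
Definition op (R : realType) := vec R -> vec R.

Section L2.
Variable R : realType.

Definition sqmod (z : R[i]) : R := (@complex.Re R z) ^+ 2 + (@complex.Im R z) ^+ 2.

Definition inl2 (x : vec R) : Prop := cvgn (series (fun k => sqmod (x k))).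

Definition l2norm (x : vec R) : R := Num.sqrt (limn (series (fun k => sqmod (x k)))).

Definition vsub (x y : vec R) : vec R := fun k => x k - y k.

Definition norm_cvg (u : nat -> vec R) (y : vec R) : Prop :=
  (fun j => l2norm (vsub (u j) y)) @ \oo --> (0 : R).

Definition compact_op (T : op R) : Prop :=
  [/\ (forall x, inl2 x -> inl2 (T x)),
      (forall x y, inl2 x -> inl2 y -> T (fun k => x k + y k) = (fun k => T x k + T y k)),
      (forall (a : R[i]) x, inl2 x -> T (fun k => a * x k) = (fun k => a * T x k)) &
      (forall u : nat -> vec R, (forall j, inl2 (u j)) ->
         (exists B : R, forall j, l2norm (u j) <= B) ->
         exists phi : nat -> nat, exists y : vec R,
           {homo phi : m n / (m < n)%N >-> (m < n)%N} /\ inl2 y /\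
           norm_cvg (fun j => T (u (phi j))) y)].

Definition diag_proj (P : op R) : Prop :=
  exists d : nat -> bool, forall x k, P x k = (if d k then x k else 0).

Definition finite_rank (T : op R) : Prop :=
  exists s : seq (vec R), forall x, inl2 x ->
    exists c : nat -> R[i], forall k, T x k = \sum_(i < size s) c i * (nth (fun _ => 0) s i) k.

Definition zero_op (T : op R) : Prop := forall x, T x = (fun _ => 0).

End L2.

(* Main.v *)
Require Import Defs.
From HB Require Import structures.
From mathcomp Require Import all_boot all_order all_algebra.
From mathcomp Require Import complex.
From mathcomp Require Import all_classical all_reals all_analysis.
From mathcomp Require Import lra ring zify.
Import Order.TTheory GRing.Theory Num.Theory.
Import numFieldNormedType.Exports.
Local Open Scope classical_set_scope.
Local Open Scope ring_scope.
Section Aux.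
Set Implicit Arguments. Unset Strict Implicit.
Variable R : realType.
Implicit Types x y v : vec R.

Lemma sqmod_ge0 (a : R[i]) : 0 <= sqmod a.
Proof. rewrite /sqmod; nra. Qed.

Lemma sqmodB (a b : R[i]) : sqmod (a - b) <= 2 * sqmod a + 2 * sqmod b.
Proof. case: a => a1 a2; case: b => b1 b2; rewrite /sqmod /=.
have := sqr_ge0 (a1+b1); have := sqr_ge0 (a2+b2). nra. Qed.

Lemma sqmodD (a b : R[i]) : sqmod (a + b) <= 2 * sqmod a + 2 * sqmod b.
Proof. case: a => a1 a2; case: b => b1 b2; rewrite /sqmod /=.
have := sqr_ge0 (a1-b1); have := sqr_ge0 (a2-b2). nra. Qed.

Lemma Re_sqmod (a : R[i]) : (complex.Re a) ^+ 2 <= sqmod a.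
Proof. rewrite /sqmod; nra. Qed.

Lemma series_nd (a : nat -> R) : (forall k, 0 <= a k) -> nondecreasing_seq (series a).
Proof. move=> a0; rewrite seriesEnat; exact: nondecreasing_series. Qed.

Lemma series_lim_ge0 (a : nat -> R) : (forall k, 0 <= a k) -> cvgn (series a) ->
  0 <= limn (series a).
Proof.
move=> a0 ca; have := nondecreasing_cvgn_le (series_nd a0) ca 0.
by rewrite seriesEnat /= big_geq.
Qed.

Lemma cmp_series (a b : nat -> R) : (forall k, 0 <= a k) -> (forall k, a k <= b k) ->
  cvgn (series b) -> cvgn (series a) /\ limn (series a) <= limn (series b).
Proof.
move=> a0 ab cb.
have ca : cvgn (series a).
  apply: (series_le_cvg (v_ := b) a0 _ ab cb) => k; exact: le_trans (a0 k) (ab k).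
by split => //; apply: lim_series_le.
Qed.

Lemma coord_le v k : inl2 v -> sqmod (v k) <= l2norm v ^+ 2.
Proof.
move=> hv; rewrite /l2norm sqr_sqrtr; last by apply: series_lim_ge0 => // i; exact: sqmod_ge0.
apply: le_trans (nondecreasing_cvgn_le (series_nd (fun i => sqmod_ge0 (v i))) hv k.+1).
rewrite seriesEnat /= big_nat_recr //= lerDr.
by apply: sumr_ge0 => i _; exact: sqmod_ge0.
Qed.

Lemma l2norm_ge0 v : 0 <= l2norm v.
Proof. exact: sqrtr_ge0. Qed.

Lemma coord_Re v k : inl2 v -> `|complex.Re (v k)| <= l2norm v.
Proof.
move=> hv; rewrite -sqrtr_sqr /l2norm ler_sqrt; last first.
  by apply: series_lim_ge0 => // i; exact: sqmod_ge0.
have := coord_le k hv; rewrite /l2norm sqr_sqrtr.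
  by apply: le_trans; exact: Re_sqmod.
by apply: series_lim_ge0 => // i; exact: sqmod_ge0.
Qed.

Lemma inl2_dom2 x y w : inl2 x -> inl2 y ->
  (forall k, sqmod (w k) <= 2 * sqmod (x k) + 2 * sqmod (y k)) -> inl2 w.
Proof.
move=> hx hy hw.
have cb : cvgn (series ((2 : R) *: (fun k => sqmod (x k)) + (2 : R) *: (fun k => sqmod (y k)))).
  by apply: is_cvg_seriesD; apply: is_cvg_seriesZ.
have := @cmp_series (fun k => sqmod (w k)) _ (fun k => sqmod_ge0 (w k)) _ cb.
by case => //.
Qed.

Lemma inl2_sub x y : inl2 x -> inl2 y -> inl2 (vsub x y).
Proof. move=> hx hy; apply: (inl2_dom2 hx hy) => k; exact: sqmodB. Qed.

Lemma inl2_add x y : inl2 x -> inl2 y -> inl2 (fun k => x k + y k).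
Proof. move=> hx hy; apply: (inl2_dom2 hx hy) => k; exact: sqmodD. Qed.

Lemma inl2_dom x w (C : R) : inl2 x -> 0 <= C ->
  (forall k, sqmod (w k) <= C * sqmod (x k)) -> inl2 w.
Proof.
move=> hx C0 hw.
have cb : cvgn (series (C *: (fun k => sqmod (x k)))) by apply: is_cvg_seriesZ.
by have [] := @cmp_series (fun k => sqmod (w k)) _ (fun k => sqmod_ge0 (w k)) hw cb.
Qed.

Lemma l2norm_le x w : inl2 x ->
  (forall k, sqmod (w k) <= sqmod (x k)) -> l2norm w <= l2norm x.
Proof.
move=> hx hw.
have [_ h] := @cmp_series (fun k => sqmod (w k)) _ (fun k => sqmod_ge0 (w k)) hw hx.
by rewrite /l2norm ler_sqrt // series_lim_ge0 // => k; exact: sqmod_ge0.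
Qed.

End Aux.
Section Main.
Set Implicit Arguments. Unset Strict Implicit.
Variables (R : realType) (E : nat -> op R) (d : nat -> nat -> bool).
Hypothesis HE : forall n, (1 <= n)%N -> forall x k, E n x k = if d n k then x k else 0.

Definition cnt a b k := (\sum_(a <= n < b) (d n k : nat))%N.

Lemma natC (c : nat) : (c%:R : R[i]) = ((c%:R : R)%:C)%C.
Proof. by rewrite rmorph_nat. Qed.

Lemma Re_nat (c : nat) : complex.Re (c%:R : R[i]) = c%:R.
Proof. by rewrite natC. Qed.

Lemma ReB (a b : R[i]) : complex.Re (a - b) = complex.Re a - complex.Re b.
Proof. by case: a => ? ?; case: b. Qed.

Lemma ReD (a b : R[i]) : complex.Re (a + b) = complex.Re a + complex.Re b.
Proof. by case: a => ? ?; case: b. Qed.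

Lemma sqmodMn (a : R[i]) (c : nat) : sqmod (a * c%:R) = (c%:R : R) ^+ 2 * sqmod a.
Proof. rewrite natC; case: a => a1 a2; rewrite /sqmod /=. ring. Qed.

Lemma sqmodN (a : R[i]) : sqmod (- a) = sqmod a.
Proof. case: a => a1 a2; rewrite /sqmod /=. ring. Qed.

Lemma sqmod0 : sqmod (0 : R[i]) = 0.
Proof. rewrite /sqmod /=. ring. Qed.

Lemma sqmod_eq0 (a : R[i]) : sqmod a <= 0 -> a = 0.
Proof.
case: a => a1 a2; rewrite /sqmod /= => h.
have h1 : a1 = 0 by nra.
have h2 : a2 = 0 by nra.
by rewrite h1 h2.
Qed.

Lemma psumE a b x k : (1 <= a)%N ->
  \sum_(a <= n < b) E n x k = x k * ((cnt a b k)%:R : R[i]).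
Proof.
move=> a1; rewrite /cnt natr_sum mulr_sumr; apply: eq_big_nat => n /andP[an _].
by rewrite HE ?(leq_trans a1 an) //; case: (d n k); rewrite ?mulr1 ?mulr0.
Qed.

Lemma cnt_le a b k : (cnt a b k <= b - a)%N.
Proof.
rewrite /cnt; apply: leq_trans (_ : \sum_(a <= n < b) 1 <= _)%N.
  by apply: leq_sum => n _; case: (d n k).
by rewrite sum_nat_const_nat muln1.
Qed.

Lemma inl2_psum a b x : (1 <= a)%N -> inl2 x -> inl2 (fun k => \sum_(a <= n < b) E n x k).
Proof.
move=> a1 hx; apply: (inl2_dom (C := (b%:R : R) ^+ 2)) hx _ _ => //.
move=> k; rewrite psumE // sqmodMn ler_wpM2r ?sqmod_ge0 //.
rewrite ler_sqr ?nnegrE ?ler0n // ler_nat.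
exact: leq_trans (cnt_le a b k) (leq_subr _ _).
Qed.

Lemma cnt_split a m b k : (a <= m <= b)%N -> cnt a b k = (cnt a m k + cnt m b k)%N.
Proof. by move=> /andP[h1 h2]; rewrite /cnt (big_cat_nat h1 h2). Qed.

Lemma cnt_zero a b k : (forall n, (a <= n)%N -> d n k = false) -> cnt a b k = 0%N.
Proof. move=> h; rewrite /cnt big_nat big1 // => n /andP[hn _]; by rewrite h. Qed.

Lemma cnt_single a b k ns : (1 <= a)%N -> (forall n, (1 <= n)%N -> d n k = (n == ns)) ->
  cnt a b k = (a <= ns < b)%N.
Proof.
move=> a1 h; rewrite /cnt.
rewrite (eq_big_nat _ _ (F2 := fun n => if n == ns then 1%N else 0%N)); last first.
  by move=> n /andP[an _]; rewrite h ?(leq_trans a1 an) //; case: (n == ns).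
by rewrite -big_mkcond big_nat1_eq; case: (_ && _).
Qed.

Definition ek (k : nat) : vec R := fun j => if j == k then 1 else 0.

Lemma sqmod_ek k j : sqmod (ek k j) = if j == k then 1 else 0.
Proof. rewrite /ek; case: (j == k); rewrite /sqmod /=; ring. Qed.

Lemma series_ek k n : (k < n)%N -> series (fun j => sqmod (ek k j)) n = 1.
Proof.
move=> kn; rewrite seriesEnat /=.
under eq_bigr do rewrite sqmod_ek.
by rewrite -big_mkcond big_nat1_eq /= kn.
Qed.

Lemma inl2_ek k : inl2 (ek k).
Proof.
apply/cvg_ex; exists 1; apply: cvg_near_cst.
exists k.+1 => // n /= hn; exact: series_ek.
Qed.

Lemma l2norm_ek k : l2norm (ek k) <= 1.
Proof.
rewrite /l2norm -sqrtr1 ler_sqrt //; apply: limr_le; first exact: inl2_ek.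
exists k.+1 => // n /= hn; by rewrite series_ek.
Qed.

Arguments inl2_ek k : clear implicits.
Arguments l2norm_ek k : clear implicits.

Variable K : op R.
Hypothesis hK : compact_op K.
Hypothesis hconv : forall x, inl2 x ->
  norm_cvg (fun M => fun k => \sum_(1 <= n < M.+1) E n x k) (fun k => x k + K x k).

Lemma near_oo (P : nat -> Prop) : (\forall n \near \oo, P n) ->
  exists N, forall n, (N <= n)%N -> P n.
Proof. by case=> N _ hN; exists N. Qed.

Lemma inl2_K x : inl2 x -> inl2 (K x).
Proof. by case: hK => h _ _ _; apply: h. Qed.

Lemma inl2_D x M : inl2 x ->
  inl2 (vsub (fun k => \sum_(1 <= n < M.+1) E n x k) (fun k => x k + K x k)).
Proof.
move=> hx; apply: inl2_sub; first exact: inl2_psum.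
exact: inl2_add hx (inl2_K hx).
Qed.

Lemma stepA k : exists B, (forall n, (B < n)%N -> d n k = false) /\
   `|(cnt 1 B.+1 k)%:R - 1 - complex.Re (K (ek k) k)| < 1/2 :> R.
Proof.
have hc := hconv (inl2_ek k).
have h12 : 0 < 1/2 :> R by lra.
have [N hN] := near_oo (cvgr0_norm_lt _ hc _ h12).
have key : forall M, (N <= M)%N ->
    `|(cnt 1 M.+1 k)%:R - 1 - complex.Re (K (ek k) k)| < 1/2 :> R.
  move=> M hM; have := hN M hM; rewrite ger0_norm ?l2norm_ge0 // => hl.
  apply: le_lt_trans hl.
  have := coord_Re k (inl2_D (M := M) (inl2_ek k)).
  by rewrite /vsub psumE // ReB ReD /ek eqxx mul1r Re_nat /= opprD addrA.
exists N; split; last exact: key.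
case=> // n hn.
have h1 := key n hn; have h2 := key n.+1 (ltnW hn).
move: h2; rewrite /cnt big_nat_recr //= -/(cnt 1 n.+1 k) natrD => h2.
have : ((d n.+1 k : nat)%:R : R) < 1.
  move: h1 h2; rewrite !ltr_norml => /andP[h1 h1'] /andP[h2 h2']; lra.
by case: (d n.+1 k) => //=; rewrite ltxx.
Qed.

Lemma homo_ge (phi : nat -> nat) : {homo phi : m n / (m < n)%N >-> (m < n)%N} ->
  forall n, (n <= phi n)%N.
Proof. by move=> hphi; elim=> // n IH; apply: leq_ltn_trans IH (hphi _ _ (ltnSn n)). Qed.

Lemma stepB : exists B : nat -> nat, exists k0,
  (forall k n, (B k < n)%N -> d n k = false) /\
  (forall k, (k0 <= k)%N -> cnt 1 (B k).+1 k = 1%N).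
Proof.
have [B hB] := choice stepA.
exists B.
case: (pselect (exists k0, forall k, (k0 <= k)%N -> cnt 1 (B k).+1 k = 1%N)) => [[k0 hk0]|hno].
  by exists k0; split => // k n hn; exact: (hB k).1 n hn.
exfalso.
have bad : forall k0, exists k, (k0 <= k)%N /\ cnt 1 (B k).+1 k <> 1%N.
  move=> k0; apply: contrapT => h; apply: hno; exists k0 => k hk.
  by apply: contrapT => hne; apply: h; exists k; split.
have [f hf] := choice bad.
case: hK => _ _ _ hc.
have hb : exists B : R, forall j, l2norm (ek (f j)) <= B.
  by exists 1 => j; exact: l2norm_ek.
have [phi [y [hphi [hy hcv]]]] := hc (fun j => ek (f j)) (fun j => inl2_ek (f j)) hb.
have hy0 := cvg_series_cvg_0 hy.
have h116 : 0 < 1/16 :> R by lra.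
have [K1 hK1] := near_oo (cvgr0_norm_lt _ hy0 _ h116).
have h14 : 0 < 1/4 :> R by lra.
have [J hJ] := near_oo (cvgr0_norm_lt _ hcv _ h14).
pose j := maxn K1 J.
have phij : (j <= phi j)%N by apply: homo_ge.
pose k := f (phi j).
have kK1 : (K1 <= k)%N.
  apply: leq_trans (leq_maxl K1 J) _; apply: leq_trans phij _; exact: (hf _).1.
have hyk := hK1 k kK1.
have hJj := hJ j (leq_maxr _ _).
have hc1 := coord_Re k (inl2_sub (inl2_K (inl2_ek k)) hy).
rewrite /vsub ReB in hc1.
have hRe := Re_sqmod (y k).
have [_ hA] := hB k.
have hne := (hf (phi j)).2.
rewrite -/k in hne.
move: hyk hJj hc1 hRe hA hne.
rewrite /= ger0_norm ?sqmod_ge0 // ger0_norm ?l2norm_ge0 //.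
set c := cnt 1 (B k).+1 k.
move=> hyk hJj hc1 hRe hA hne.
have hc0 : c = 0%N \/ (2 <= c)%N by case: (c) hne => [|[|c']] // _; [left|right].
have hc' : (c%:R : R) = 0 \/ 2 <= (c%:R : R).
  case: hc0 => [->|h]; [by left | right]; by rewrite (ler_nat R 2 c).
move: hA hc1; rewrite ltr_norml ler_norml => /andP[hA1 hA2] /andP[hc1 hc2].
case: hc' => hc'; nra.
Qed.

Section Fin.
Variables (B : nat -> nat) (k0 : nat).
Hypothesis hB1 : forall k n, (B k < n)%N -> d n k = false.
Hypothesis hB2 : forall k, (k0 <= k)%N -> cnt 1 (B k).+1 k = 1%N.

Lemma cnt_big k M : (k0 <= k)%N -> (B k <= M)%N -> cnt 1 M.+1 k = 1%N.
Proof.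
move=> hk hM.
have hs : (1 <= (B k).+1 <= M.+1)%N by apply/andP; split.
rewrite (@cnt_split 1 (B k).+1 M.+1 k hs) hB2 //.
by rewrite cnt_zero // => n hn; apply: hB1.
Qed.

Lemma Kzero x k : inl2 x -> (k0 <= k)%N -> K x k = 0.
Proof.
move=> hx hk; apply: sqmod_eq0.
rewrite leNgt; apply/negP => hpos.
have he : 0 < Num.min (sqmod (K x k)) 1 by rewrite lt_min hpos ltr01.
have [N hN] := near_oo (cvgr0_norm_lt _ (hconv hx) _ he).
pose M := maxn N (B k).
have := hN M (leq_maxl _ _); rewrite ger0_norm ?l2norm_ge0 // lt_min => /andP[h1 h2].
have h0 := l2norm_ge0 (vsub (fun k => \sum_(1 <= n < M.+1) E n x k) (fun k => x k + K x k)).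
have := coord_le k (inl2_D (M:=M) hx).
rewrite /vsub psumE // cnt_big ?leq_maxr // mulr1 opprD addrA subrr sub0r sqmodN => h3.
nra.
Qed.

Lemma unique_cover k n m : (k0 <= k)%N -> (1 <= n)%N -> (1 <= m)%N -> n != m ->
  d n k -> d m k -> False.
Proof.
move=> hk hn hm nm.
wlog lt_nm : n m hn hm nm / (n < m)%N.
  move=> W; case: (ltngtP n m) => [h|h|h]; first exact: W.
    by move=> a b; apply: (W m n) => //; rewrite eq_sym.
  by rewrite h eqxx in nm.
move=> dn dm.
have hmB : (m <= B k)%N by rewrite leqNgt; apply/negP => /hB1; rewrite dm.
have := hB2 hk.
rewrite (@cnt_split 1 m) ?hm ?ltnS //.
rewrite (@cnt_split 1 n) ?hn ?(ltnW lt_nm) //.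
rewrite /cnt (@big_ltn _ _ _ n) // (@big_ltn _ _ _ m) ?ltnS // dn dm.
move=> h; move: h; rewrite !addnA; lia.
by rewrite (leq_trans hmB).

Qed.

Lemma cover k : (k0 <= k)%N -> exists2 n, (1 <= n)%N & d n k.
Proof.
move=> hk; apply: contrapT => h.
have := hB2 hk; rewrite cnt_zero // => n hn.
by apply/negP => dn; apply: h; exists n.
Qed.

Definition n0 := maxn 1 (\max_(i < k0) B i).

Lemma small k n : (k < k0)%N -> (n0 < n)%N -> d n k = false.
Proof.
move=> hk hn; apply: hB1.
apply: leq_ltn_trans hn; apply: leq_trans (leq_maxr 1 _).
exact: (@leq_bigmax _ (fun i : 'I_k0 => B i) (Ordinal hk)).
Qed.

Lemma disj k n m : (n0 < n)%N -> (1 <= m)%N -> n != m -> d n k -> d m k -> False.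
Proof.
move=> hn hm nm dn dm; case: (ltnP k k0) => hk.
  by rewrite small in dn.
apply: (unique_cover hk _ hm nm dn dm).
exact: leq_trans (leq_maxl 1 _) (ltnW hn).
Qed.

Lemma main_res : exists n0 : nat, (1 <= n0)%N /\
    (forall m n, (n0 < m)%N -> (n0 < n)%N ->
       forall x, E n (E m x) = (if n == m then E n x else (fun _ => 0))) /\
    (forall m n, (1 <= m <= n0)%N -> (1 <= n <= n0)%N -> m != n ->
       diag_proj (fun x => E n (E m x)) /\ finite_rank (fun x => E n (E m x))) /\
    (forall N, (n0 <= N)%N ->
       exists EN : op R, diag_proj EN /\
         (forall x, inl2 x ->
            norm_cvg (fun M => fun k => \sum_(N.+1 <= n < M.+1) E n x k) (EN x)) /\
         (forall n, (1 <= n <= N)%N -> zero_op (fun x => EN (E n x)))).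
Proof.
have n01 : (1 <= n0)%N by exact: leq_maxl.
exists n0; split => //; split.
  move=> m n hm hn x.
  have m1 : (1 <= m)%N := leq_trans n01 (ltnW hm).
  have n1 : (1 <= n)%N := leq_trans n01 (ltnW hn).
  apply: funext => k.
  case: eqP => [->|nm].
    by rewrite HE // HE //; case: (d m k).
  rewrite HE // HE //.
  case dn: (d n k); case dm: (d m k) => //.
  by exfalso; apply: (disj hn m1 (introN eqP nm) dn dm).
split.
  move=> m n /andP[m1 _] /andP[n1 _] nm; split.
    by exists (fun k => d m k && d n k) => x k; rewrite HE // HE //; case: (d n k); case: (d m k).
  exists (mkseq ek k0) => x hx.
  exists (fun i => E n (E m x) i) => k.
  rewrite size_mkseq.
  rewrite (eq_bigr (fun i : 'I_k0 => if (i : nat) == k then E n (E m x) i else 0)); last first.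
    move=> i _; rewrite nth_mkseq // /ek.
    by rewrite [k == _]eq_sym; case: (_ == _); rewrite ?mulr1 ?mulr0.
  rewrite -big_mkcond big_ord1_eq.
  case: ltnP => // hk.
  rewrite HE // HE //.
  case dn: (d n k); case dm: (d m k) => //.
  by exfalso; apply: (unique_cover hk m1 n1 nm dm dn).
move=> N hN.
pose dEN k := `[< exists n, (N < n)%N /\ d n k >].
have dEN_small : forall k, (k < k0)%N -> dEN k = false.
  move=> k hk; apply/negbTE/asboolPn => -[n [hn dn]].
  by rewrite small // in dn; apply: leq_ltn_trans hN hn.
exists (fun x k => if dEN k then x k else 0); split; first by exists dEN.
split.
  move=> x hx.
  apply: (@squeeze_cvgr _ _ _ _ (fun=> 0)
     (fun M => l2norm (vsub (fun k => \sum_(1 <= n < M.+1) E n x k) (fun k => x k + K x k)))); last first.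
  - exact: hconv.
  - exact: cvg_cst.
  exists N => // M /= hM.
  rewrite l2norm_ge0 /=; apply: l2norm_le; first exact: inl2_D.
  move=> k; rewrite /vsub psumE // psumE //.
  case: (ltnP k k0) => hk.
    rewrite dEN_small // cnt_zero ?mulr0 ?subr0 ?sqmod0 ?sqmod_ge0 // => n hn.
    by apply: small => //; apply: leq_ltn_trans hN hn.
  have [ns ns1 dns] := cover hk.
  have single : forall n, (1 <= n)%N -> d n k = (n == ns).
    move=> n n1; case: eqP => [->//|ne].
    by apply/negP => dn; apply: (unique_cover hk n1 ns1 (introN eqP ne) dn dns).
  have -> : dEN k = (N < ns)%N.
    apply/asboolP/idP => [[n [hn dn]]|h].
      by rewrite single ?(leq_trans _ hn) // in dn; move/eqP: dn => <-.
    by exists ns; split.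
  rewrite (cnt_single _ _ single) // (cnt_single _ _ single) // Kzero // addr0 ns1 /= !ltnS.
  case: (ltnP N ns) => h1; case: (ltnP M ns) => h2 /=.
  - by rewrite mulr0 sub0r.
  - by rewrite mulr1 subrr.
  - by exfalso; lia.
  - by rewrite mulr0 subrr mulr1 subrr.
move=> n /andP[n1 nN] x; apply: funext => k /=.
rewrite HE //.
case dn: (d n k); last by case: ifP.
suff -> : dEN k = false by [].
apply/negbTE/asboolPn => -[n' [hn' dn']].
case: (ltnP k k0) => hk.
  by rewrite small // in dn'; apply: leq_ltn_trans hN hn'.
have nn' : n' != n by apply/eqP => e; move: hn'; rewrite e ltnNge nN.
exact: (unique_cover hk (leq_trans (leq_trans n01 hN) (ltnW hn')) n1 nn' dn' dn).
Qed.

End Fin.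

End Main.

Theorem lemma3p5 (R : realType) (E : nat -> op R) :
  (forall n, (1 <= n)%N -> diag_proj (E n)) ->
  (exists K : op R, compact_op K /\
     forall x, inl2 x ->
       norm_cvg (fun M => fun k => \sum_(1 <= n < M.+1) E n x k)
                (fun k => x k + K x k)) ->
  exists n0 : nat, (1 <= n0)%N /\
    (forall m n, (n0 < m)%N -> (n0 < n)%N ->
       forall x, E n (E m x) = (if n == m then E n x else (fun _ => 0))) /\
    (forall m n, (1 <= m <= n0)%N -> (1 <= n <= n0)%N -> m != n ->
       diag_proj (fun x => E n (E m x)) /\ finite_rank (fun x => E n (E m x))) /\
    (forall N, (n0 <= N)%N ->
       exists EN : op R, diag_proj EN /\
         (forall x, inl2 x ->
            norm_cvg (fun M => fun k => \sum_(N.+1 <= n < M.+1) E n x k) (EN x)) /\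
         (forall n, (1 <= n <= N)%N -> zero_op (fun x => EN (E n x)))).
Proof.
move=> hE [K [hK hconv]].
have hd : forall n, exists dn : nat -> bool,
    (1 <= n)%N -> forall x k, E n x k = if dn k then x k else 0.
  move=> n; case: (pselect (1 <= n)%N) => h.
    by have [dn hdn] := hE n h; exists dn => _; exact: hdn.
  by exists (fun _ => false) => h'; case: h.
have [d HE] := choice hd.
have [B [k0 [hB1 hB2]]] := stepB HE hK hconv.
exact: (main_res HE hK hconv hB1 hB2).
Qed.
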